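(* There is a unique mass distribution $(m_1',m_2',m_3')$ (positive, with $m_1'+m_2'+m_3'=1$) such that $m_1'\hat{\mathbf b}_1+m_2'\hat{\mathbf b}_2+m_3'\hat{\mathbf b}_3=0$, namely the dual masses $m_i'=\frac12(1-m_i)$.
   Context: Masses $m_1,m_2,m_3>0$, $m_1+m_2+m_3=1$. The shape sphere (oriented m-triangles $(\mathbf a_i)$, $\sum m_i\mathbf a_i=0$, with $\sum m_i|\mathbf a_i|^2=1$, modulo rotation, with the kinematic metric, a round sphere of radius $1/2$) is magnified by factor $2$ and identified isometrically with the unit sphere $S^2(1)\subset\mathbb R^3$ so that the equator of collinear shapes is the circle $x^2+y^2=1$, $z=0$ and positively oriented shapes have $z>0$. $\hat{\mathbf b}_1,\hat{\mathbf b}_2,\hat{\mathbf b}_3$ are the unit vectors representing the binary collision shapes $\mathbf a_2=\mathbf a_3$, $\mathbf a_3=\mathbf a_1$, $\mathbf a_1=\mathbf a_2$ respectively. *)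

(* Defs.v *)
From HB Require Import structures.
From mathcomp Require Import all_boot all_order all_algebra.
Set Implicit Arguments. Unset Strict Implicit. Unset Printing Implicit Defensive.
Import Order.TTheory GRing.Theory Num.Theory.
Local Open Scope ring_scope.

Definition pt (R : Type) := (R * R)%type.
Definition cfg (R : Type) := (pt R * pt R * pt R)%type.
Definition cA1 {R} (c : cfg R) : pt R := c.1.1.
Definition cA2 {R} (c : cfg R) : pt R := c.1.2.
Definition cA3 {R} (c : cfg R) : pt R := c.2.

Section Shape.
Variable R : rcfType.
Variables m1 m2 m3 : R.

Definition padd (p q : pt R) : pt R := (p.1 + q.1, p.2 + q.2).
Definition pscale (k : R) (p : pt R) : pt R := (k * p.1, k * p.2).
Definition psub (p q : pt R) : pt R := (p.1 - q.1, p.2 - q.2).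
Definition pdot (p q : pt R) : R := p.1 * q.1 + p.2 * q.2.
Definition pcross (p q : pt R) : R := p.1 * q.2 - p.2 * q.1.

Definition centered (c : cfg R) : Prop :=
  padd (padd (pscale m1 (cA1 c)) (pscale m2 (cA2 c))) (pscale m3 (cA3 c)) = (0, 0).

Definition normalized (c : cfg R) : Prop :=
  m1 * pdot (cA1 c) (cA1 c) + m2 * pdot (cA2 c) (cA2 c)
  + m3 * pdot (cA3 c) (cA3 c) = 1.

Definition shape_config (c : cfg R) : Prop := centered c /\ normalized c.

(* mass-weighted Jacobi coordinates; the map c |-> (xi1, xi2) is an isometry
   for the kinematic metric onto R^4 = C^2 *)
Definition jacobi1 (c : cfg R) : pt R :=
  pscale (Num.sqrt (m2 * m3 / (m2 + m3))) (psub (cA3 c) (cA2 c)).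
Definition jacobi2 (c : cfg R) : pt R :=
  pscale (Num.sqrt (m1 * (m2 + m3)))
    (psub (cA1 c) (pscale (m2 + m3)^-1
                     (padd (pscale m2 (cA2 c)) (pscale m3 (cA3 c))))).

(* Hopf map (xi1, xi2) |-> (|xi1|^2 - |xi2|^2, 2 Re(xi1 conj xi2),
   2 Im(conj xi1 xi2)): it is invariant under rotations of the triangle and
   identifies the shape sphere (radius 1/2, kinematic metric), magnified by 2,
   isometrically with the unit sphere S^2(1); collinear shapes go to z = 0 and
   positively oriented (counterclockwise) triangles to z > 0. *)
Definition shape_point (c : cfg R) : 'rV[R]_3 :=
  let u := jacobi1 c in let v := jacobi2 c in
  \row_(i < 3) [:: pdot u u - pdot v v; 2 * pdot u v; 2 * pcross u v]`_i.

End Shape.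

Definition e3 {R : nzRingType} : 'rV[R]_3 := \row_(i < 3) (i == 2%N :> nat)%:R.

(* Q (acting on row vectors v |-> v *m Q) is an isometry of R^3 *)
Definition orthogonal_mx {R : nzRingType} (Q : 'M[R]_3) : Prop := Q *m Q^T = 1%:M.

(* Main.v *)
Require Import Defs.
From HB Require Import structures.
From mathcomp Require Import all_boot all_order all_algebra.
From mathcomp Require Import ring lra.
Import Order.TTheory GRing.Theory Num.Theory.
Local Open Scope ring_scope.

Section S.
Variable R : rcfType.

Lemma pdot_sc (k l : R) p q : pdot (pscale k p) (pscale l q) = k * l * pdot p q.
Proof. rewrite /pdot /=; ring. Qed.
Lemma pcross_sc (k l : R) p q : pcross (pscale k p) (pscale l q) = k * l * pcross p q.
Proof. rewrite /pcross /=; ring. Qed.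

Variables m1 m2 m3 : R.
Hypotheses (hm1 : 0 < m1) (hm2 : 0 < m2) (hm3 : 0 < m3) (hm : m1 + m2 + m3 = 1).

Let s1 := Num.sqrt (m2 * m3 / (m2 + m3)).
Let s2 := Num.sqrt (m1 * (m2 + m3)).

Lemma s1sq : s1 * s1 = m2 * m3 / (m2 + m3).
Proof. rewrite -expr2 sqr_sqrtr // divr_ge0 // ?mulr_ge0 // ?addr_ge0 // ltW //. Qed.
Lemma s2sq : s2 * s2 = m1 * (m2 + m3).
Proof. rewrite -expr2 sqr_sqrtr // mulr_ge0 // ?addr_ge0 // ltW //. Qed.
Lemma Kpos : 0 < s1 * s2.
Proof.
rewrite mulr_gt0 // sqrtr_gt0 ?divr_gt0 ?mulr_gt0 ?addr_gt0 //.
Qed.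

Lemma shape_eq c : shape_point m1 m2 m3 c =
  \row_(i < 3) [:: s1 * s1 * pdot (psub (cA3 c) (cA2 c)) (psub (cA3 c) (cA2 c))
     - s2 * s2 * pdot (psub (cA1 c) (pscale (m2 + m3)^-1 (padd (pscale m2 (cA2 c)) (pscale m3 (cA3 c)))))
                       (psub (cA1 c) (pscale (m2 + m3)^-1 (padd (pscale m2 (cA2 c)) (pscale m3 (cA3 c)))));
     2 * (s1 * s2) * pdot (psub (cA3 c) (cA2 c)) (psub (cA1 c) (pscale (m2 + m3)^-1 (padd (pscale m2 (cA2 c)) (pscale m3 (cA3 c)))));
     2 * (s1 * s2) * pcross (psub (cA3 c) (cA2 c)) (psub (cA1 c) (pscale (m2 + m3)^-1 (padd (pscale m2 (cA2 c)) (pscale m3 (cA3 c)))))]`_i.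
Proof.
by rewrite /shape_point /jacobi1 /jacobi2 !pdot_sc !pcross_sc !mulrA.
Qed.

Let K := s1 * s2.

Lemma sh1 c : shape_config m1 m2 m3 c -> cA2 c = cA3 c ->
  shape_point m1 m2 m3 c = \row_(i < 3) [:: -1; 0; 0]`_i.
Proof.
case: c => [[[qx qy] [px py]] [rx ry]]; rewrite /cA2 /cA3 /= => -[Hc Hn] [ex ey]; subst rx ry.
move: Hc Hn; rewrite /centered /normalized /cA1 /cA2 /cA3 /padd /pscale /pdot /= => -[Hx Hy] Hn.
rewrite shape_eq /cA1 /cA2 /cA3 /= s2sq.
have m1n : m1 != 0 by rewrite gt_eqF.
have hqx : qx = - (m2 + m3) * px / m1.
  have e : m1 * qx = - (m2 + m3) * px by rewrite mulNr mulrDl; lra.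
  by rewrite -e; field.
have hqy : qy = - (m2 + m3) * py / m1.
  have e : m1 * qy = - (m2 + m3) * py by rewrite mulNr mulrDl; lra.
  by rewrite -e; field.
have hm1' : m1 = 1 - m2 - m3 by rewrite -hm; ring.
have m23 : m2 + m3 != 0 by rewrite gt_eqF // addr_gt0.
apply/rowP => j; rewrite !mxE; case: j => [[|[|[|j]]] hj] //=.
- rewrite /pdot /psub /padd /pscale /=.
  rewrite -Hn hqx hqy; rewrite hm1'. field.
  by rewrite -hm1' m1n m23.
- by rewrite /pdot /psub /padd /pscale /= !subrr !mul0r addr0 mulr0.
- by rewrite /pcross /psub /padd /pscale /= !subrr !mul0r subrr mulr0.
Qed.

Lemma sh2 c : shape_config m1 m2 m3 c -> cA3 c = cA1 c ->
  shape_point m1 m2 m3 c = \row_(i < 3) [:: (m3 - m1 * m2) / ((m2 + m3) * (m1 + m3));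
     2 * K / ((m2 + m3) * (m1 + m3)); 0]`_i.
Proof.
case: c => [[[px py] [qx qy]] [rx ry]]; rewrite /cA1 /cA3 /= => -[Hc Hn] [ex ey]; subst rx ry.
move: Hc Hn; rewrite /centered /normalized /cA1 /cA2 /cA3 /padd /pscale /pdot /= => -[Hx Hy] Hn.
rewrite shape_eq /cA1 /cA2 /cA3 /= s2sq s1sq /K.
have H1 : forall x, x = x * (m1 * (px * px + py * py) + m2 * (qx * qx + qy * qy) +
    m3 * (px * px + py * py)) by move=> x; rewrite Hn mulr1.
have m2n : m2 != 0 by rewrite gt_eqF.
have hqx : qx = - (m1 + m3) * px / m2.
  have e : m2 * qx = - (m1 + m3) * px by rewrite mulNr mulrDl; lra.
  by rewrite -e; field.
have hqy : qy = - (m1 + m3) * py / m2.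
  have e : m2 * qy = - (m1 + m3) * py by rewrite mulNr mulrDl; lra.
  by rewrite -e; field.
have hm1' : m1 = 1 - m2 - m3 by rewrite -hm; ring.
have m23 : m2 + m3 != 0 by rewrite gt_eqF // addr_gt0.
have m13 : m1 + m3 != 0 by rewrite gt_eqF // addr_gt0.
move: (s1 * s2) => k.
apply/rowP => j; rewrite !mxE; case: j => [[|[|[|j]]] hj] //=.
- rewrite /pdot /psub /padd /pscale /=.
  rewrite [X in _ = X]H1 hqx hqy; rewrite hm1'. field.
  by rewrite -?hm1' ?m1n ?m2n ?m3n ?m12 ?m13 ?m23.
- rewrite /pdot /psub /padd /pscale /=.
  rewrite [X in _ = X]H1 hqx hqy; rewrite hm1'. field.
  by rewrite -?hm1' ?m1n ?m2n ?m3n ?m12 ?m13 ?m23.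
- rewrite /pcross /psub /padd /pscale /= hqx hqy. field.
  by rewrite -?hm1' ?m1n ?m2n ?m3n ?m12 ?m13 ?m23.
Qed.

Lemma sh3 c : shape_config m1 m2 m3 c -> cA1 c = cA2 c ->
  shape_point m1 m2 m3 c = \row_(i < 3) [:: (m2 - m1 * m3) / ((m2 + m3) * (m1 + m2));
     - (2 * K) / ((m2 + m3) * (m1 + m2)); 0]`_i.
Proof.
case: c => [[[px py] [rx ry]] [qx qy]]; rewrite /cA1 /cA2 /= => -[Hc Hn] [ex ey]; subst rx ry.
move: Hc Hn; rewrite /centered /normalized /cA1 /cA2 /cA3 /padd /pscale /pdot /= => -[Hx Hy] Hn.
rewrite shape_eq /cA1 /cA2 /cA3 /= s2sq s1sq /K.
have H1 : forall x, x = x * (m1 * (px * px + py * py) + m2 * (px * px + py * py) +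
    m3 * (qx * qx + qy * qy)) by move=> x; rewrite Hn mulr1.
have m3n : m3 != 0 by rewrite gt_eqF.
have hqx : qx = - (m1 + m2) * px / m3.
  have e : m3 * qx = - (m1 + m2) * px by rewrite mulNr mulrDl; lra.
  by rewrite -e; field.
have hqy : qy = - (m1 + m2) * py / m3.
  have e : m3 * qy = - (m1 + m2) * py by rewrite mulNr mulrDl; lra.
  by rewrite -e; field.
have hm1' : m1 = 1 - m2 - m3 by rewrite -hm; ring.
have m23 : m2 + m3 != 0 by rewrite gt_eqF // addr_gt0.
have m12 : m1 + m2 != 0 by rewrite gt_eqF // addr_gt0.
move: (s1 * s2) => k.
apply/rowP => j; rewrite !mxE; case: j => [[|[|[|j]]] hj] //=.
- rewrite /pdot /psub /padd /pscale /=.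
  rewrite [X in _ = X]H1 hqx hqy; rewrite hm1'. field.
  by rewrite -?hm1' ?m1n ?m2n ?m3n ?m12 ?m13 ?m23.
- rewrite /pdot /psub /padd /pscale /=.
  rewrite [X in _ = X]H1 hqx hqy; rewrite hm1'. field.
  by rewrite -?hm1' ?m1n ?m2n ?m3n ?m12 ?m13 ?m23.
- rewrite /pcross /psub /padd /pscale /= hqx hqy. field.
  by rewrite -?hm1' ?m1n ?m2n ?m3n ?m12 ?m13 ?m23.
Qed.
End S.

Theorem mainTheorem17 (R : rcfType) (m1 m2 m3 : R)
  (hm1 : 0 < m1) (hm2 : 0 < m2) (hm3 : 0 < m3) (hm : m1 + m2 + m3 = 1)
  (c1 c2 c3 : cfg R) (Q : 'M[R]_3) :
  shape_config m1 m2 m3 c1 -> cA2 c1 = cA3 c1 ->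
  shape_config m1 m2 m3 c2 -> cA3 c2 = cA1 c2 ->
  shape_config m1 m2 m3 c3 -> cA1 c3 = cA2 c3 ->
  orthogonal_mx Q -> e3 *m Q = e3 ->
  let b1 := shape_point m1 m2 m3 c1 *m Q in
  let b2 := shape_point m1 m2 m3 c2 *m Q in
  let b3 := shape_point m1 m2 m3 c3 *m Q in
  let good (n1 n2 n3 : R) :=
    [/\ 0 < n1, 0 < n2, 0 < n3, n1 + n2 + n3 = 1
      & n1 *: b1 + n2 *: b2 + n3 *: b3 = 0] in
  good ((1 - m1) / 2) ((1 - m2) / 2) ((1 - m3) / 2) /\
  (forall n1 n2 n3 : R, good n1 n2 n3 ->
     [/\ n1 = (1 - m1) / 2, n2 = (1 - m2) / 2 & n3 = (1 - m3) / 2]).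
Proof.
move=> H1 e1 H2 e2 H3 e3' HQ _ b1 b2 b3 good.
have Kp := @Kpos R m1 m2 m3 hm1 hm2 hm3.
move: (Num.sqrt _ * Num.sqrt _) Kp (@sh1 R m1 m2 m3 hm1 hm2 hm3 hm c1 H1 e1) (@sh2 R m1 m2 m3 hm1 hm2 hm3 hm c2 H2 e2)
  (@sh3 R m1 m2 m3 hm1 hm2 hm3 hm c3 H3 e3') => k kp s1 s2 s3.
have m1n : m1 != 0 by rewrite gt_eqF.
have m2n : m2 != 0 by rewrite gt_eqF.
have m3n : m3 != 0 by rewrite gt_eqF.
have kn : k != 0 by rewrite gt_eqF.
have m23 : m2 + m3 != 0 by rewrite gt_eqF // addr_gt0.
have m12 : m1 + m2 != 0 by rewrite gt_eqF // addr_gt0.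
have m13 : m1 + m3 != 0 by rewrite gt_eqF // addr_gt0.
have hm1' : m1 = 1 - m2 - m3 by rewrite -hm; ring.
set x2 := (m3 - m1 * m2) / ((m2 + m3) * (m1 + m3)) in s2.
set y2 := 2 * k / ((m2 + m3) * (m1 + m3)) in s2.
set x3 := (m2 - m1 * m3) / ((m2 + m3) * (m1 + m2)) in s3.
set y3 := - (2 * k) / ((m2 + m3) * (m1 + m2)) in s3.
have E : forall n1 n2 n3, (n1 *: b1 + n2 *: b2 + n3 *: b3 = 0) <->
   (n1 * -1 + n2 * x2 + n3 * x3 = 0 /\ n2 * y2 + n3 * y3 = 0).
  move=> n1 n2 n3; rewrite /b1 /b2 /b3 s1 s2 s3; split.
  - move=> H.
    have H' : n1 *: (\row_(i < 3) [:: -1; 0; 0]`_i) + n2 *: (\row_(i < 3) [:: x2; y2; 0]`_i)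
       + n3 *: (\row_(i < 3) [:: x3; y3; 0]`_i) = 0 :> 'rV[R]_3.
      rewrite -[LHS]mulmx1 -HQ mulmxA (_ : _ *m Q = 0) ?mul0mx //.
      by rewrite !mulmxDl -!scalemxAl.
    have := congr1 (fun M : 'rV[R]_3 => M 0 (0 : 'I_3)) H'.
    have := congr1 (fun M : 'rV[R]_3 => M 0 (1 : 'I_3)) H'.
    by rewrite !mxE /= mulr0 add0r => -> ->.
  - move=> [ex ey]; rewrite !scalemxAl -!mulmxDl.
    set X := (X in X *m Q).
    suff -> : X = 0 by rewrite mul0mx.
    apply/rowP => j; rewrite !mxE; case: j => [[|[|[|j]]] hj] //=.
    + by rewrite mulr0 add0r ey.
    + by rewrite !mulr0 !addr0.
split.
  split.
  - rewrite divr_gt0 //; lra.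
  - rewrite divr_gt0 //; lra.
  - rewrite divr_gt0 //; lra.
  - by rewrite hm1'; field.
  apply E; rewrite /x2 /x3 /y2 /y3; split; rewrite hm1'; field;
    by rewrite -?hm1' ?m1n ?m2n ?m3n ?m12 ?m13 ?m23.
move=> n1 n2 n3 [p1 p2 p3 hs /E [ex ey]].
have hn3 : n3 = n2 * (m1 + m2) / (m1 + m3).
  have e : n3 = (n3 * y3 * ((m2 + m3) * (m1 + m2))) / (- (2 * k)).
    by rewrite /y3; field; rewrite ?kn ?m12 ?m23.
  have e' : n3 * y3 = - (n2 * y2) by apply/eqP; rewrite -addr_eq0 addrC ey.
  rewrite e e' /y2; field; by rewrite ?kn ?m12 ?m13 ?m23.
have hn1 : n1 = n2 * (m2 + m3) / (m1 + m3).
  have e : n1 = n2 * x2 + n3 * x3 by rewrite -[RHS]subr0 -ex; ring.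
  rewrite e hn3 /x2 /x3 hm1'; field.
  by rewrite -?hm1' ?m1n ?m2n ?m3n ?m12 ?m13 ?m23.
have hn2 : n2 = (m1 + m3) / 2.
  have e : n2 = (n2 * (m2 + m3) / (m1 + m3) + n2 + n2 * (m1 + m2) / (m1 + m3)) * (m1 + m3) / 2.
    rewrite hm1'; field.
    by rewrite -?hm1' ?m1n ?m2n ?m3n ?m12 ?m13 ?m23.
  by rewrite e -hn1 -hn3 hs mul1r.
split.
- rewrite hn1 hn2 hm1'; field; by rewrite -?hm1' ?m1n ?m2n ?m3n ?m12 ?m13 ?m23.
- by rewrite hn2 hm1'; field.
- rewrite hn3 hn2 hm1'; field; by rewrite -?hm1' ?m1n ?m2n ?m3n ?m12 ?m13 ?m23.
Qed.
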